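(* Let $(\mathcal{P},\cdot)$ be an admissible Poisson algebra such that the center of the Lie algebra $\mathfrak{g}_{\mathcal{P}}=(\mathcal{P},\{\,,\,\})$ is zero. Then $\mathcal{P}$ has no non-zero idempotent. If moreover $\mathcal{P}$ is finite-dimensional, then $\mathcal{P}$ is a nilalgebra.
   Context: $\mathbb{K}$ is a field of characteristic different from $2$ and $3$. Associator: $A(X,Y,Z)=(X\cdot Y)\cdot Z-X\cdot(Y\cdot Z)$. An admissible Poisson algebra is a $\mathbb{K}$-vector space $\mathcal{P}$ with a bilinear product $\cdot$ satisfying $3A(X,Y,Z)=(X\cdot Z)\cdot Y+(Y\cdot Z)\cdot X-(Y\cdot X)\cdot Z-(Z\cdot X)\cdot Y$ for all $X,Y,Z$. Its bracket is $\{X,Y\}=\frac12(X\cdot Y-Y\cdot X)$ (a Lie bracket), and $\mathfrak{g}_{\mathcal{P}}$ denotes $(\mathcal{P},\{\,,\,\})$. Powers: $X^1=X$, $X^{i+1}=X\cdot X^i$; $\mathcal{P}$ is a nilalgebra if for every $X$ there is $r$ with $X^r=0$. *)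

(* Defs.v *)
From mathcomp Require Import all_boot all_order all_algebra.
Set Implicit Arguments. Unset Strict Implicit. Unset Printing Implicit Defensive.
Import GRing.Theory.
Local Open Scope ring_scope.

Section AdmissiblePoisson.
Variables (K : fieldType) (P : lmodType K) (mul : P -> P -> P).

Definition bilinear_prod : Prop :=
  (forall a X Y Z, mul (a *: X + Y) Z = a *: mul X Z + mul Y Z) /\
  (forall a X Y Z, mul X (a *: Y + Z) = a *: mul X Y + mul X Z).

Definition assoc (X Y Z : P) : P := mul (mul X Y) Z - mul X (mul Y Z).

Definition admissible_identity : Prop :=
  forall X Y Z, 3%:R *: assoc X Y Z =
    mul (mul X Z) Y + mul (mul Y Z) X - mul (mul Y X) Z - mul (mul Z X) Y.

Definition admissible_Poisson : Prop := bilinear_prod /\ admissible_identity.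

Definition pbracket (X Y : P) : P := (2%:R)^-1 *: (mul X Y - mul Y X).

Definition lie_center_zero : Prop :=
  forall Z, (forall X, pbracket X Z = 0) -> Z = 0.

(* apow X n = X^(n+1) with X^1 = X, X^(i+1) = X . X^i *)
Fixpoint apow (X : P) (n : nat) : P :=
  match n with 0 => X | n'.+1 => mul X (apow X n') end.

Definition nilalgebra : Prop := forall X, exists n, apow X n = 0.

Definition is_idempotent (e : P) : Prop := mul e e = e.

End AdmissiblePoisson.

Definition finite_dim (K : fieldType) (P : lmodType K) : Prop :=
  exists s : seq P, forall x : P,
    exists c : 'I_(size s) -> K, x = \sum_(i < size s) c i *: s`_i.

(* Main.v *)
Require Import Defs.
From mathcomp Require Import all_boot all_order all_algebra.
From Stdlib Require Import ClassicalEpsilon.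
Set Implicit Arguments. Unset Strict Implicit. Unset Printing Implicit Defensive.
Import GRing.Theory.
Local Open Scope ring_scope.

Inductive zex := At of nat | Ad of zex & zex | Ng of zex | Zr | Mn of zex & nat.

Section ReflZ.
Variable V : zmodType.
Fixpoint zev (env : seq V) (e : zex) : V :=
  match e with
  | At n => nth 0 env n
  | Ad a b => zev env a + zev env b
  | Ng a => - zev env a
  | Zr => 0
  | Mn a k => zev env a *+ k
  end.
Fixpoint zcf (e : zex) (n : nat) : nat * nat :=
  match e with
  | At m => if m == n then (1, 0)%N else (0, 0)%N
  | Ad a b => let (p1, q1) := zcf a n in let (p2, q2) := zcf b n in (p1 + p2, q1 + q2)%N
  | Ng a => let (p, q) := zcf a n in (q, p)
  | Zr => (0, 0)%N
  | Mn a k => let (p, q) := zcf a n in (p * k, q * k)%N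
  end.

Definition zsum (env : seq V) e := \sum_(i < size env) (nth 0 env i *+ (zcf e i).1 - nth 0 env i *+ (zcf e i).2).

Lemma zev_cf env e : zev env e = zsum env e.
Proof.
rewrite /zsum; elim: e => [m|a iha b ihb|a iha||a iha k] /=.
- case: (ltnP m (size env)) => hm.
  + rewrite (bigD1 (Ordinal hm)) //= big1 /=.
      by rewrite eqxx subr0 addr0.
    move=> i hi; have: (m == i) = false.
      by apply/eqP => E; move: hi; rewrite -val_eqE /= E eqxx.
    by move=> ->; rewrite subr0.
  + rewrite nth_default // big1 // => i _.
    have: (m == i) = false.
      by apply/eqP => E; move: (ltn_ord i); rewrite -E ltnNge hm.
    by move=> ->; rewrite subr0.
- rewrite iha ihb -big_split; apply: eq_bigr => i _ /=.
  case: (zcf a i) => p1 q1; case: (zcf b i) => p2 q2 /=.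
  by rewrite !mulrnDr opprD addrACA.
- rewrite iha -sumrN; apply: eq_bigr => i _ /=.
  by case: (zcf a i) => p q /=; rewrite opprB.
- by rewrite big1 // => i _; rewrite subrr.
- rewrite iha -sumrMnl; apply: eq_bigr => i _ /=.
  by case: (zcf a i) => p q /=; rewrite mulrnBl !mulrnA.
Qed.

Definition zcheck (N : nat) (e1 e2 : zex) : bool :=
  all (fun i => (zcf e1 i).1 + (zcf e2 i).2 == (zcf e2 i).1 + (zcf e1 i).2)%N (iota 0 N).

Lemma zev_eq env e1 e2 : zcheck (size env) e1 e2 -> zev env e1 = zev env e2.
Proof.
move=> /allP h; rewrite !zev_cf /zsum; apply: eq_bigr => i _.
have hi : (i : nat) \in iota 0 (size env) by rewrite mem_iota add0n ltn_ord.
have /eqP := h i hi.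
set x := nth 0 env i.
case: (zcf e1 i) => p1 q1; case: (zcf e2 i) => p2 q2 /= E.
apply/eqP; rewrite subr_eq addrAC eq_sym subr_eq -!mulrnDr.
by rewrite addnC E addnC.
Qed.
End ReflZ.

Ltac inlist x l :=
  match l with
  | nil => constr:(false)
  | x :: _ => constr:(true)
  | _ :: ?t => inlist x t
  end.
Ltac zatoms t env :=
  match t with
  | (?a + ?b)%R => let e := zatoms a env in zatoms b e
  | (- ?a)%R => zatoms a env
  | 0%R => env
  | (?a *+ ?k)%R => zatoms a env
  | _ => let b := inlist t env in
         match b with true => env | false => constr:(t :: env) end
  end.
Ltac zidx x l :=
  match l with
  | x :: _ => constr:(0%nat)
  | _ :: ?t => let n := zidx x t in constr:(S n)
  end.
Ltac zreify t env :=
  match t with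
  | (?a + ?b)%R => let ra := zreify a env in let rb := zreify b env in constr:(Ad ra rb)
  | (- ?a)%R => let ra := zreify a env in constr:(Ng ra)
  | 0%R => constr:(Zr)
  | (?a *+ ?k)%R => let ra := zreify a env in constr:(Mn ra k)
  | _ => let n := zidx t env in constr:(At n)
  end.
Ltac zmod_eq :=
  match goal with
  | |- @eq ?V ?l ?r =>
    let e0 := zatoms l (@nil V) in
    let env := zatoms r e0 in
    let el := zreify l env in
    let er := zreify r env in
    change (zev env el = zev env er); apply: zev_eq; vm_compute; reflexivity
  end.


Section Bil.
Variables (K : fieldType) (P : lmodType K) (f : P -> P -> P).
Hypothesis hf : bilinear_prod f.
Lemma fDl x y z : f (x + y) z = f x z + f y z.
Proof. by have := hf.1 1 x y z; rewrite !scale1r. Qed.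
Lemma fDr x y z : f x (y + z) = f x y + f x z.
Proof. by have := hf.2 1 x y z; rewrite !scale1r. Qed.
Lemma f0l z : f 0 z = 0.
Proof. have h := fDl 0 0 z; rewrite addr0 in h; apply: (addrI (f 0 z)); by rewrite -h addr0. Qed.
Lemma f0r z : f z 0 = 0.
Proof. have h := fDr z 0 0; rewrite addr0 in h; apply: (addrI (f z 0)); by rewrite -h addr0. Qed.
Lemma fZl a x z : f (a *: x) z = a *: f x z.
Proof. by have := hf.1 a x 0 z; rewrite addr0 f0l addr0. Qed.
Lemma fZr a x z : f z (a *: x) = a *: f z x.
Proof. by have := hf.2 a z x 0; rewrite addr0 f0r addr0. Qed.
Lemma fNl x z : f (- x) z = - f x z.
Proof. by rewrite -scaleN1r fZl scaleN1r. Qed.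
Lemma fNr x z : f z (- x) = - f z x.
Proof. by rewrite -scaleN1r fZr scaleN1r. Qed.
Lemma fBl x y z : f (x - y) z = f x z - f y z.
Proof. by rewrite fDl fNl. Qed.
Lemma fBr x y z : f z (x - y) = f z x - f z y.
Proof. by rewrite fDr fNr. Qed.
Lemma fMnl x z n : f (x *+ n) z = f x z *+ n.
Proof. by elim: n => [|n ih]; rewrite ?mulr0n ?f0l // !mulrS fDl ih. Qed.
Lemma fMnr x z n : f z (x *+ n) = f z x *+ n.
Proof. by elim: n => [|n ih]; rewrite ?mulr0n ?f0r // !mulrS fDr ih. Qed.
Lemma f_sumr x I (r : seq I) (F : I -> P) : f x (\sum_(i <- r) F i) = \sum_(i <- r) f x (F i).
Proof.
apply: (big_rec2 (fun a b => f x a = b)); first exact: f0r.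
by move=> i a b _ <-; rewrite fDr.
Qed.
Lemma f_suml x I (r : seq I) (F : I -> P) : f (\sum_(i <- r) F i) x = \sum_(i <- r) f (F i) x.
Proof.
apply: (big_rec2 (fun a b => f a x = b)); first exact: f0l.
by move=> i a b _ <-; rewrite fDl.
Qed.
End Bil.

Section Main.
Variables (K : fieldType) (P : lmodType K) (mul : P -> P -> P).
Hypothesis h2 : (2%:R : K) != 0.
Hypothesis h3 : (3%:R : K) != 0.
Hypothesis hb : bilinear_prod mul.
Hypothesis hI : forall X Y Z, 3%:R *: assoc mul X Y Z =
    mul (mul X Z) Y + mul (mul Y Z) X - mul (mul Y X) Z - mul (mul Z X) Y.

Definition cm x y := mul x y + mul y x.
Definition br x y := mul x y - mul y x.
Definition DD a b c := 3%:R *: assoc mul a b c -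
   (mul (mul a c) b + mul (mul b c) a - mul (mul b a) c - mul (mul c a) b).
Lemma DD0 a b c : DD a b c = 0.
Proof. by rewrite /DD hI subrr. Qed.

Ltac expand := rewrite /cm /br /DD /assoc;
  rewrite ?(fDl hb, fDr hb, fBl hb, fBr hb, fNl hb, fNr hb);
  rewrite ?(scalerDr, scalerBr, scalerN, scaler_nat).

Lemma scale3_eq0 (v : P) : (3%:R : K) *: v = 0 -> v = 0.
Proof. by move/eqP; rewrite scaler_eq0 (negPf h3) => /eqP. Qed.

Lemma cmA x y z : cm (cm x y) z = cm x (cm y z).
Proof.
apply/eqP; rewrite -subr_eq0; apply/eqP; apply: scale3_eq0.
have -> : (3%:R : K) *: (cm (cm x y) z - cm x (cm y z)) =
  DD x y z + DD x z y - DD z x y - DD z y x by expand; zmod_eq.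
by rewrite !DD0 !(addr0, subr0, oppr0).
Qed.

Lemma leib x y z : br x (cm y z) = cm (br x y) z + cm y (br x z).
Proof.
apply/eqP; rewrite -subr_eq0; apply/eqP; apply: scale3_eq0.
have -> : (3%:R : K) *: (br x (cm y z) - (cm (br x y) z + cm y (br x z))) =
  - DD x y z - DD x z y + DD y x z - DD y z x + DD z x y - DD z y x by expand; zmod_eq.
by rewrite !DD0 !(addr0, subr0, oppr0).
Qed.

Lemma cm_bil : bilinear_prod cm.
Proof.
split=> a X Y Z; rewrite /cm (hb.1) (hb.2) scalerDr; zmod_eq.
Qed.
Lemma br_bil : bilinear_prod br.
Proof.
split=> a X Y Z; rewrite /br (hb.1) (hb.2) scalerBr; zmod_eq.
Qed.

Definition cc x y := (2%:R : K)^-1 *: cm x y.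
Definition bb x y := (2%:R : K)^-1 *: (mul x y - mul y x).
Lemma bb_br x y : bb x y = (2%:R : K)^-1 *: br x y. Proof. by []. Qed.

Lemma cc_bil : bilinear_prod cc.
Proof.
split=> a X Y Z; rewrite /cc ?(cm_bil.1) ?(cm_bil.2) scalerDr !scalerA mulrC //.
Qed.
Lemma bb_bil : bilinear_prod bb.
Proof.
split=> a X Y Z; rewrite !bb_br ?(br_bil.1) ?(br_bil.2) scalerDr !scalerA mulrC //.
Qed.

Lemma ccC x y : cc x y = cc y x.
Proof. by rewrite /cc /cm addrC. Qed.
Lemma bbxx x : bb x x = 0.
Proof. by rewrite /bb subrr scaler0. Qed.

Lemma ccA x y z : cc (cc x y) z = cc x (cc y z).
Proof.
by rewrite /cc (fZl cm_bil) (fZr cm_bil) cmA.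
Qed.

Lemma leibc x y z : bb x (cc y z) = cc (bb x y) z + cc y (bb x z).
Proof.
rewrite !bb_br /cc (fZr br_bil) (fZl cm_bil) (fZr cm_bil) leib.
by rewrite !scalerA mulrC -scalerDr.
Qed.

Lemma mul_cb x y : mul x y = cc x y + bb x y.
Proof.
rewrite /cc /bb -scalerDr.
have -> : cm x y + (mul x y - mul y x) = (2%:R : K) *: mul x y.
  rewrite scaler_nat /cm. zmod_eq.
by rewrite scalerK.
Qed.

Lemma idem_central e : mul e e = e -> forall x, bb x e = 0.
Proof.
move=> he x.
have hce : cc e e = e by have := mul_cb e e; rewrite bbxx addr0 he => <-.
set u := bb x e.
have hu : u = cc e u + cc e u.
  by rewrite /u -{1}hce leibc ccC.
have h0 : cc e u = 0.
  have h1 : cc e u = cc e u + cc e u.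
    by rewrite {1}hu (fDr cc_bil) -!ccA hce.
  by apply: (addrI (cc e u)); rewrite addr0 -h1.
by rewrite hu h0 addr0.
Qed.

Section Pow.
Variable X : P.
Local Notation q := (apow mul X).

Lemma bXq n : bb X (q n) = 0 /\ q n.+1 = cc X (q n).
Proof.
elim: n => [|n [ih1 ih2]].
  by split; [exact: bbxx | rewrite /= mul_cb bbxx addr0].
have b0 : bb X (q n.+1) = 0.
  by rewrite ih2 leibc bbxx ih1 (f0l cc_bil) (f0r cc_bil) addr0.
split=> //.
by rewrite -[q n.+2]/(mul X (q n.+1)) mul_cb b0 addr0.
Qed.

Lemma qS n : q n.+1 = cc X (q n).
Proof. by case: (bXq n). Qed.

Lemma qM i j : cc (q i) (q j) = q (i + j).+1.
Proof.
elim: i => [|i ih]; first by rewrite add0n qS.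
by rewrite qS ccA ih -qS addSn.
Qed.

Inductive inS (k : nat) : P -> Prop :=
| S0 : inS k 0
| Sg j : (k <= j)%N -> inS k (q j)
| Sl a y z : inS k y -> inS k z -> inS k (a *: y + z).

Lemma inS_c i j y z : inS i y -> inS j z -> inS (i + j).+1 (cc y z).
Proof.
move=> hy hz; elim: hy => [|j1 hj1|a y1 z1 _ ih1 _ ih2].
- rewrite (f0l cc_bil); exact: S0.
- elim: hz => [|j2 hj2|a y2 z2 _ ih1 _ ih2].
  + rewrite (f0r cc_bil); exact: S0.
  + rewrite qM; apply: Sg; by rewrite ltnS leq_add.
  + rewrite (cc_bil.2); exact: Sl.
- rewrite (cc_bil.1); exact: Sl.
Qed.

Fixpoint cpow (v : P) (n : nat) : P :=
  match n with 0 => v | n'.+1 => cc v (cpow v n') end.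

Lemma inS_cpow v n : inS 0 v -> inS n (cpow v n).
Proof.
move=> hv; elim: n => [|n ih] //=.
by have := inS_c hv ih; rewrite add0n.
Qed.

Lemma fix_cpow m v n : cc (q m) v = q m -> cc (q m) (cpow v n) = q m.
Proof.
move=> h; elim: n => [|n ih] //=.
by rewrite -ccA h.
Qed.

Lemma fix_inS m v n y : cc (q m) v = q m -> inS m y -> cc y (cpow v n) = y.
Proof.
move=> h; elim => [|j hj|a y1 z1 _ ih1 _ ih2].
- by rewrite (f0l cc_bil).
- case: (ltngtP m j) => hmj.
  + have -> : j = (j - m.+1 + m).+1 by rewrite -addnS subnK.
    by rewrite -qM ccA fix_cpow.
  + by move: hj; rewrite leqNgt hmj.
  + by rewrite -hmj fix_cpow.
- by rewrite (cc_bil.1) ih1 ih2.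
Qed.

Hypothesis hc : forall e, mul e e = e -> e = 0.

Lemma fix_zero m v : inS 0 v -> cc (q m) v = q m -> q m = 0.
Proof.
move=> hv h.
have he : cc (cpow v m) (cpow v m) = cpow v m.
  exact: fix_inS h (inS_cpow m hv).
have e0 : cpow v m = 0.
  by apply: hc; rewrite mul_cb bbxx addr0.
by rewrite -(fix_cpow m h) e0 (f0r cc_bil).
Qed.

Lemma inS_sum k I (r : seq I) (F : I -> P) : (forall i, inS k (F i)) -> inS k (\sum_(i <- r) F i).
Proof.
move=> h; apply: big_ind => //; first exact: S0.
by move=> y z hy hz; rewrite -[y]scale1r; exact: Sl.
Qed.

Lemma nil_of_rel n (w : nat -> K) : (exists j, (j < n)%N && (w j != 0)) ->
  \sum_(j < n) w j *: q j = 0 -> exists m, q m = 0.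
Proof.
move=> hex hsum.
case: (ex_minnP hex) => m /andP[hmn hwm] hmin.
exists m.
pose v := \sum_(j < n) (if (m < j)%N then (- w j / w m) *: q (j - m.+1) else 0).
apply: (@fix_zero m v).
  apply: inS_sum => j; case: ifP => _; last exact: S0.
  rewrite -[_ *: _]addr0; apply: Sl; [exact: Sg | exact: S0].
rewrite /v (f_sumr cc_bil).
have e1 : forall j : 'I_n, cc (q m) (if (m < j)%N then (- w j / w m) *: q (j - m.+1) else 0)
    = (- (w m)^-1) *: (if (m < j)%N then w j *: q j else 0).
  move=> j; case: ifP => hj; last by rewrite (f0r cc_bil) scaler0.
  rewrite (fZr cc_bil) qM scalerA !mulNr [w j * _]mulrC.
  by rewrite [(m + _)%N]addnC -addnS subnK.
rewrite (eq_bigr _ (fun j _ => e1 j)) -scaler_sumr.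
have hs : \sum_(j < n) w j *: q j =
    w m *: q m + \sum_(j < n) (if (m < j)%N then w j *: q j else 0).
  rewrite (bigD1 (Ordinal hmn)) //= [in RHS](bigD1 (Ordinal hmn)) //= ltnn add0r.
  congr (_ + _); apply: eq_bigr => j hj.
  case: ifP => // hj2.
  have hjm : (j < m)%N.
    rewrite ltn_neqAle leqNgt hj2 andbT; apply: contra hj => /eqP E.
    by apply/eqP; apply: val_inj.
  have -> : w j = 0.
    apply/eqP; apply: contraLR hjm => hw; rewrite -leqNgt; apply: hmin.
    by rewrite ltn_ord.
  by rewrite scale0r.
have hs2 : \sum_(j < n) (if (m < j)%N then w j *: q j else 0) = - (w m *: q m).
  by apply/eqP; rewrite -addr_eq0 addrC -hs hsum.
by rewrite hs2 scalerN scaleNr opprK scalerA mulVf // scale1r.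
Qed.
End Pow.
End Main.

Lemma fd_dep (K : fieldType) (P : lmodType K) (s : seq P)
  (hs : forall x : P, exists c : 'I_(size s) -> K, x = \sum_(i < size s) c i *: s`_i)
  (f : nat -> P) :
  exists w : nat -> K, (exists j, (j < (size s).+1)%N && (w j != 0)) /\
     \sum_(j < (size s).+1) w j *: f j = 0.
Proof.
set d := size s in hs *.
pose cf x := proj1_sig (constructive_indefinite_description _ (hs x)).
have cfP x : x = \sum_(i < d) cf x i *: s`_i.
  by rewrite /cf; case: (constructive_indefinite_description _ _).
pose M := \matrix_(j < d.+1, i < d) cf (f j) i.
have hr : (0 < \rank (kermx M))%N by rewrite mxrank_ker subn_gt0 ltnS rank_leq_col.
have [i0 hi0] : exists i, row i (kermx M) != 0.
  case: (pickP (fun i => row i (kermx M) != 0)) => [i hi|h]; first by exists i.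
  have : kermx M = 0.
    apply/row_matrixP => i; have := h i; rewrite /= row0 => /negbFE /eqP //.
  by move=> E; move: hr; rewrite E mxrank0.
pose w := row i0 (kermx M).
have wM : w *m M = 0 by apply/eqP; rewrite -sub_kermx row_sub.
have [j0 hj0] : exists j, w 0 j != 0.
  case: (pickP (fun j => w 0 j != 0)) => [j hj|h]; first by exists j.
  have : w = 0.
    apply/matrixP => a b; rewrite ord1; have := h b; move=> /negbFE /eqP ->; by rewrite mxE.
  by move=> E; move: hi0; rewrite -/w E eqxx.
exists (fun j => w 0 (inord j)); split.
  by exists j0; rewrite ltn_ord inord_val hj0.
under eq_bigr => j _ do rewrite inord_val [f j]cfP scaler_sumr.
rewrite exchange_big /=.
rewrite (eq_bigr (fun i : 'I_d => (w *m M) 0 i *: s`_i)); last first.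
  move=> i _; rewrite mxE scaler_suml; apply: eq_bigr => j _.
  by rewrite scalerA /M !mxE.
by apply: big1 => i _; rewrite wM mxE scale0r.
Qed.


Theorem mainTheorem5 (K : fieldType) (P : lmodType K) (mul : P -> P -> P) :
  (2%:R : K) != 0 -> (3%:R : K) != 0 ->
  admissible_Poisson mul ->
  lie_center_zero mul ->
  (forall e : P, is_idempotent mul e -> e = 0) /\
  (finite_dim P -> nilalgebra mul).
Proof.
move=> h2 h3 [hb hI] hz.
have part1 : forall e : P, is_idempotent mul e -> e = 0.
  move=> e he; apply: hz => x; exact: (idem_central h2 h3 hb hI he x).
split => // [[s hs]] X.
have [w [hw hsum]] := fd_dep hs (apow mul X).
exact: (nil_of_rel h2 h3 hb hI part1 hw hsum).
Qed.
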